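(* Let $n\ge2$, $d_1,\dots,d_n\ge2$, and let $\rho$ be a pure state (rank-one density operator) on $\mathbb{C}^{d_1}\otimes\cdots\otimes\mathbb{C}^{d_n}$. Let $T^{(12\cdots n)}$ be the vector with entries $t_{u_1,\dots,u_n}=\operatorname{tr}\big(\rho\,(A^{(1)}_{u_1})^\dagger\otimes\cdots\otimes(A^{(n)}_{u_n})^\dagger\big)$ for all $u_s\in\{1,\dots,d_s^2-1\}$, $s=1,\dots,n$. Then $$\|T^{(12\cdots n)}\|^2\le\frac{d_1\cdots d_n\big(n-1-\sum_{s=1}^n\frac{1}{d_s^2}\big)+1}{n-1}.$$
   Context: Generalized Pauli operators: for an integer $d\ge2$, let $\omega$ be a fixed primitive $d$-th root of unity and $E_{m,j}$ the $d\times d$ matrix units (indices modulo $d$). Writing $u\in\{0,\dots,d^2-1\}$ uniquely as $u=di+j$ with $0\le i,j\le d-1$, set $A_u=\sum_{m=0}^{d-1}\omega^{im}E_{m,m+j}$; so $A_0=I_d$ and $\operatorname{tr}(A_uA_v^\dagger)=d\delta_{uv}$. $A^{(s)}_u$ denotes these for $d=d_s$. $\|v\|=\sqrt{v^\dagger v}$. *)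

(* Defs.v *)
From HB Require Import structures.
From mathcomp Require Import all_boot all_order all_algebra.
Set Implicit Arguments. Unset Strict Implicit. Unset Printing Implicit Defensive.
Import Order.TTheory GRing.Theory Num.Theory.
Local Open Scope ring_scope.

(* Complex scalars: an arbitrary numClosedFieldType C (e.g. complex R for a
   real closed field R, or algC); conjugation is z^*. *)

(* Generalized Pauli operator A_u for u = d*i + j (0 <= i,j < d):
   A_u = \sum_m w^(i m) E_{m, m+j (mod d)}. *)
Definition pauli (C : numClosedFieldType) (d : nat) (w : C) (u : nat) : 'M[C]_d :=
  \matrix_(a < d, b < d)
    if (b : nat) == ((a + u %% d) %% d)%N then w ^+ (u %/ d * a)%N else 0.

Definition adjmx (C : numClosedFieldType) (m n : nat) (M : 'M[C]_(m, n)) : 'M[C]_(n, m) :=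
  (map_mx (fun z => z^*) M)^T.

(* Multi-indices of the computational basis of C^{d_1} (x) ... (x) C^{d_n}. *)
Notation multi_index n d := {dffun forall s : 'I_n, 'I_(d s)}.

Definition pure_state (C : numClosedFieldType) (n : nat) (d : 'I_n -> nat)
  (rho : multi_index n d -> multi_index n d -> C) : Prop :=
  exists psi : multi_index n d -> C,
    \sum_(i : multi_index n d) `|psi i| ^+ 2 = 1 /\
    forall i j, rho i j = psi i * (psi j)^*.

(* Entry (j, i) of the Kronecker product (A_1)^dagger (x) ... (x) (A_n)^dagger. *)
Definition kron_adj_entry (C : numClosedFieldType) (n : nat) (d : 'I_n -> nat)
  (A : forall s : 'I_n, 'M[C]_(d s)) (j i : multi_index n d) : C :=
  \prod_(s : 'I_n) adjmx (A s) (j s) (i s).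

Definition corr_entry (C : numClosedFieldType) (n : nat) (d : 'I_n -> nat)
  (w : 'I_n -> C) (rho : multi_index n d -> multi_index n d -> C)
  (u : {dffun forall s : 'I_n, 'I_(d s ^ 2)}) : C :=
  \sum_(i : multi_index n d) \sum_(j : multi_index n d)
     rho i j * kron_adj_entry (fun s => pauli (d s) (w s) (u s)) j i.

(* ||T^{(12..n)}||^2, sum over u_s in {1, ..., d_s^2 - 1}. *)
Definition corr_norm2 (C : numClosedFieldType) (n : nat) (d : 'I_n -> nat)
  (w : 'I_n -> C) (rho : multi_index n d -> multi_index n d -> C) : C :=
  \sum_(u : {dffun forall s : 'I_n, 'I_(d s ^ 2)} | [forall s, (u s : nat) != 0%N])
     `|corr_entry w rho u| ^+ 2.

(* Main.v *)
Require Import Defs.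
From HB Require Import structures.
From mathcomp Require Import all_boot all_order all_algebra.
From mathcomp Require Import zify ring lra.
Set Implicit Arguments. Unset Strict Implicit. Unset Printing Implicit Defensive.
Import Order.TTheory GRing.Theory Num.Theory.
Local Open Scope ring_scope.

Lemma big_dffun_distr0 (R : comNzRingType) (I : finType) (T_ : I -> finType)
  (P_ : forall i, {ffun T_ i -> R}) :
  \prod_(i : I) \sum_(x : T_ i) P_ i x =
  \sum_(f : {dffun forall i, T_ i}) \prod_(i : I) P_ i (f i).
Proof.
rewrite (reindex (@dffun_of_fprod I T_)); last first.
  by apply: onW_bij; apply: dffun_of_fprod_bij.
under [RHS]eq_bigr => t _ do under eq_bigr => i _ do rewrite ffunE.
rewrite (big_fprod 1 +%R P_).
under eq_bigr => i _ do rewrite (big_tag P_ i).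
by rewrite bigA_distr_big_dep.
Qed.

Lemma big_dffun_distr (R : comNzRingType) (I : finType) (T_ : I -> finType)
  (F : forall i, T_ i -> R) :
  \prod_(i : I) \sum_(x : T_ i) F i x =
  \sum_(f : {dffun forall i, T_ i}) \prod_(i : I) F i (f i).
Proof.
have := big_dffun_distr0 (fun i => [ffun x => F i x]).
under eq_bigr do under eq_bigr do rewrite ffunE.
by under [X in _ = X -> _]eq_bigr do under eq_bigr do rewrite ffunE.
Qed.

Section Pauli.
Variables (C : numClosedFieldType) (d : nat) (w : C).
Hypothesis hd : (0 < d)%N.
Hypothesis hw : d.-primitive_root w.

Lemma wconj : w * w^* = 1.
Proof.
rewrite -normCK.
have : `|w ^+ d| = 1 by rewrite prim_expr_order // normr1.
rewrite normrX => /eqP; rewrite pexpr_eq1 // => /eqP ->; exact: expr1n.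
Qed.

Lemma char_sum (a a' : 'I_d) :
  \sum_(q < d) ((w^* ^+ a * w ^+ a') ^+ q) = d%:R * (a == a')%:R.
Proof.
have [<-|ne] := eqVneq a a'.
  rewrite -exprMn mulrC wconj expr1n.
  under eq_bigr do rewrite expr1n.
  by rewrite sumr_const card_ord mulr1.
rewrite mulr0.
set z := _ * _.
have zd : z ^+ d = 1.
  have wd := prim_expr_order hw.
  rewrite /z exprMn -!exprM [(a * d)%N]mulnC [(a' * d)%N]mulnC !exprM -rmorphXn wd rmorph1 !expr1n mulr1 //.
have z1 : z - 1 != 0.
  rewrite subr_eq0; apply/eqP => hz.
  have : w ^+ a * z = w ^+ a' by rewrite /z mulrA -exprMn wconj expr1n mul1r.
  rewrite hz mulr1 => /eqP; rewrite (eq_prim_root_expr hw) !modn_small //.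
  by move/eqP/val_inj=> e; rewrite e eqxx in ne.
have := subrX1 z d; rewrite zd subrr => /esym/eqP; rewrite mulf_eq0 (negPf z1) /=.
by move/eqP.
Qed.

Lemma hlt (q r : 'I_d) : (q * d + r < d ^ 2)%N.
Proof. rewrite -mulnn; have := ltn_ord q; have := ltn_ord r; nia. Qed.

Lemma hdiv (x : 'I_(d ^ 2)) : (x %/ d < d)%N.
Proof. by rewrite ltn_divLR // mulnn. Qed.

Definition hmk (p : 'I_d * 'I_d) : 'I_(d ^ 2) := Ordinal (hlt p.1 p.2).
Definition hinv (x : 'I_(d ^ 2)) : 'I_d * 'I_d :=
  (Ordinal (hdiv x), Ordinal (ltn_pmod x hd)).

Lemma sum_split (F : 'I_(d ^ 2) -> C) :
  \sum_(x < d ^ 2) F x = \sum_(q < d) \sum_(r < d) F (hmk (q, r)).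
Proof.
rewrite pair_big /= (reindex hmk) //.
exists hinv => [[q r] _|x _].
- rewrite /= /hinv /hmk /=; congr pair; apply/val_inj => /=.
  + by rewrite divnMDl // divn_small ?addn0.
  + by rewrite modnMDl modn_small.
- by apply/val_inj; rewrite /= -divn_eq.
Qed.

Lemma sum_unique (a b : 'I_d) :
  \sum_(r < d) ((b : nat) == ((a + r) %% d)%N)%:R = 1 :> C.
Proof.
have r0lt : ((b + (d - a))%N %% d < d)%N by rewrite ltn_pmod.
rewrite (bigD1 (Ordinal r0lt)) //= big1 ?addr0.
  rewrite modnDmr addnCA subnKC ?(ltnW (ltn_ord a)) // -modnDmr modnn addn0 modn_small //.
  by rewrite eqxx.
move=> r /eqP ne; case: eqP => // hb; exfalso; apply: ne; apply/val_inj => /=.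
by rewrite hb modnDml addnAC subnKC ?(ltnW (ltn_ord a)) // modnDl modn_small.
Qed.

Lemma pauli_ortho (a b a' b' : 'I_d) :
  \sum_(x < d ^ 2) (pauli d w x a b)^* * pauli d w x a' b' =
  d%:R * (a == a')%:R * (b == b')%:R.
Proof.
rewrite sum_split.
have E (q r : 'I_d) (i j : 'I_d) : pauli d w (hmk (q, r)) i j =
   ((j : nat) == ((i + r) %% d)%N)%:R * w ^+ (q * i).
  rewrite /pauli mxE /= divnMDl // divn_small // addn0 modnMDl (modn_small (ltn_ord r)).
  by case: eqP; rewrite ?mul1r ?mul0r.
under eq_bigr => q _ do under eq_bigr => r _ do rewrite !E rmorphM /= conjC_nat.
have T (q r : 'I_d) : ((b : nat) == ((a + r) %% d)%N)%:R * (w ^+ (q * a))^* *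
        (((b' : nat) == ((a' + r) %% d)%N)%:R * w ^+ (q * a')) =
   (((b : nat) == ((a + r) %% d)%N)%:R * ((b' : nat) == ((a' + r) %% d)%N)%:R) *
   ((w^* ^+ a * w ^+ a') ^+ q) :> C.
  rewrite rmorphXn exprMn -!exprM [(a * q)%N]mulnC [(a' * q)%N]mulnC; ring.
under eq_bigr do under eq_bigr do rewrite T.
rewrite exchange_big /=.
under eq_bigr do rewrite -big_distrr /= char_sum.
have [<-|ne] := eqVneq a a'; last first.
  by rewrite big1 ?mulr0 ?mul0r // => r _; rewrite mulr0.
rewrite mulr1 -big_distrl /= mulrC; congr (_ * _).
transitivity (\sum_(r < d) ((b == b')%:R * ((b : nat) == ((a + r) %% d)%N)%:R) : C); last first.
  by rewrite -big_distrr /= sum_unique mulr1.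
apply: eq_bigr => r _.
case: (eqVneq (b : nat) ((a + r) %% d)%N) => [hb|]; last by rewrite !mul0r mulr0.
by rewrite -hb mul1r mulr1 eq_sym.
Qed.
End Pauli.

Section Main.
Variables (C : numClosedFieldType) (n : nat) (d : 'I_n -> nat) (w : 'I_n -> C).
Variables (psi : multi_index n d -> C) (rho : multi_index n d -> multi_index n d -> C).
Hypothesis hd : forall s, (0 < d s)%N.
Hypothesis hw : forall s, (d s).-primitive_root (w s).
Hypothesis hpsi : \sum_i `|psi i| ^+ 2 = 1.
Hypothesis hrho : forall i j, rho i j = psi i * (psi j)^*.

Notation Mi := (multi_index n d).
Notation U := {dffun forall s : 'I_n, 'I_(d s ^ 2)}.

Definition P s (x : nat) (a b : 'I_(d s)) : C := pauli (d s) (w s) x a b.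
Definition f (u : U) := `|corr_entry w rho u| ^+ 2.
Definition p (i j i' j' : Mi) := psi i * (psi j)^* * (psi i')^* * psi j'.

Lemma t_expand u : corr_entry w rho u =
  \sum_(i : Mi) \sum_(j : Mi) psi i * (psi j)^* * \prod_s (P (u s) (i s) (j s))^*.
Proof.
rewrite /corr_entry; apply: eq_bigr => i _; apply: eq_bigr => j _.
rewrite hrho /kron_adj_entry; congr (_ * _); apply: eq_bigr => s _. by rewrite /adjmx /P !mxE.
Qed.

Lemma f_expand u : f u =
  \sum_(i : Mi) \sum_(j : Mi) \sum_(i' : Mi) \sum_(j' : Mi) p i j i' j' *
     \prod_s ((P (u s) (i s) (j s))^* * P (u s) (i' s) (j' s)).
Proof.
rewrite /f normCK t_expand [X in _ * X]rmorph_sum /=.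
under [X in _ * X]eq_bigr => i _ do rewrite rmorph_sum /=.
rewrite big_distrl /=; apply: eq_bigr => i _; rewrite big_distrl /=; apply: eq_bigr => j _.
rewrite big_distrr /=; apply: eq_bigr => i' _; rewrite big_distrr /=; apply: eq_bigr => j' _.
rewrite !rmorphM /= rmorph_prod /= conjCK big_split /= /p.
rewrite [X in _ * (_ * X)](eq_bigr (fun s => P (u s) (i' s) (j' s))); last by move=> s _; exact: conjCK.
ring.
Qed.


Definition Q (S : pred 'I_n) :=
  \sum_(u : U | [forall s, S s || ((u s : nat) == 0%N)]) f u.
Definition hh (S : pred 'I_n) s (a b a' b' : 'I_(d s)) : C :=
  if S s then (a == a')%:R * (b == b')%:R else (a == b)%:R * (a' == b')%:R.
Arguments hh : clear implicits.
Definition W (S : pred 'I_n) :=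
  \sum_(i : Mi) \sum_(j : Mi) \sum_(i' : Mi) \sum_(j' : Mi) p i j i' j' *
     \prod_(s : 'I_n) hh S s (i s) (j s) (i' s) (j' s).

Lemma h0 s : (0 < d s ^ 2)%N.
Proof. by rewrite expn_gt0 hd. Qed.

Lemma P0 s (a b : 'I_(d s)) : P (s:=s) 0 a b = (a == b)%:R.
Proof.
rewrite /P /pauli mxE mod0n addn0 modn_small // div0n mul0n expr0.
have -> : (b == a :> nat) = (a == b) by rewrite eq_sym.
by case: (a == b).
Qed.

Lemma sumG (S : pred 'I_n) s (a b a' b' : 'I_(d s)) :
  \sum_(x : 'I_(d s ^ 2)) (if S s || ((x : nat) == 0%N) then (P x a b)^* * P x a' b' else 0)
  = (if S s then (d s)%:R else 1) * hh S s a b a' b'.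
Proof.
rewrite /hh; case: (S s) => /=.
  by rewrite /P (pauli_ortho (hd s) (hw s)) mulrA.
rewrite (bigD1 (Ordinal (h0 s))) //= big1 ?addr0; last first.
  by move=> x /negPf; rewrite -(inj_eq val_inj) /= => ->.
by rewrite !P0 conjC_nat mul1r.
Qed.

Lemma Q_W (S : pred 'I_n) : Q S = (\prod_(s | S s) (d s)%:R) * W S.
Proof.
pose G s (x : 'I_(d s ^ 2)) (a b a' b' : 'I_(d s)) :=
  if S s || ((x : nat) == 0%N) then (P x a b)^* * P x a' b' else 0.
transitivity (\sum_(u : U) \sum_(i : Mi) \sum_(j : Mi) \sum_(i' : Mi) \sum_(j' : Mi)
   p i j i' j' * \prod_(s : 'I_n) G s (u s) (i s) (j s) (i' s) (j' s)).
  rewrite /Q big_mkcond; apply: eq_bigr => u _.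
  have [H|H] := boolP [forall s, S s || ((u s : nat) == 0%N)].
    rewrite f_expand; do 4! (apply: eq_bigr => ? _); congr (_ * _).
    by apply: eq_bigr => s _; rewrite /G (forallP H s).
  move/forallPn: H => [s0 Hs0].
  symmetry; do 4! (apply: big1 => ? _).
  by rewrite (bigD1 s0) //= /G (negbTE Hs0) mul0r mulr0.
rewrite /W exchange_big big_distrr /=; apply: eq_bigr => i _.
rewrite exchange_big big_distrr /=; apply: eq_bigr => j _.
rewrite exchange_big big_distrr /=; apply: eq_bigr => i' _.
rewrite exchange_big big_distrr /=; apply: eq_bigr => j' _.
rewrite -big_distrr /=.
rewrite -(big_dffun_distr (fun s x => G s x (i s) (j s) (i' s) (j' s))).
under eq_bigr => s _ do rewrite /G sumG.
rewrite big_split /= -big_mkcond /=; ring.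
Qed.

Lemma W_ext (S S' : pred 'I_n) : S =1 S' -> W S = W S'.
Proof.
move=> e; rewrite /W; do 4! (apply: eq_bigr => ? _); congr (_ * _).
by apply: eq_bigr => s _; rewrite /hh e.
Qed.

Lemma W_C (S : pred 'I_n) : W (predC S) = W S.
Proof.
rewrite /W.
transitivity (\sum_(i : Mi) \sum_(j : Mi) \sum_(i' : Mi) \sum_(j' : Mi) (p i i' j j' *
     \prod_(s : 'I_n) hh S s (i s) (i' s) (j s) (j' s))).
  do 4! (apply: eq_bigr => ? _); congr (_ * _); first by rewrite /p; ring.
  by apply: eq_bigr => s _; rewrite /hh /=; case: (S s).
by apply: eq_bigr => i _; apply: exchange_big.
Qed.

Lemma sum_delta (T : finType) (x : T) (F : T -> C) :
  \sum_(y : T) F y * (x == y)%:R = F x.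
Proof.
rewrite (bigD1 x) //= eqxx mulr1 big1 ?addr0 // => y /negbTE.
by rewrite eq_sym => ->; rewrite mulr0.
Qed.

Lemma prod_eq (x y : Mi) : \prod_(s : 'I_n) ((x s == y s)%:R : C) = (x == y)%:R.
Proof.
case: eqP => [->|ne].
  by apply: big1 => s _; rewrite eqxx.
have [/existsP [s hs]|/existsPn h] := boolP [exists s, x s != y s].
  by rewrite (bigD1 s) //= (negbTE hs) mul0r.
by exfalso; apply: ne; apply/ffunP => s; apply/eqP; have := h s; rewrite negbK.
Qed.

Lemma WT : W predT = 1.
Proof.
rewrite /W.
transitivity (\sum_(i : Mi) \sum_(j : Mi) p i j i j).
  apply: eq_bigr => i _; apply: eq_bigr => j _.
  transitivity (\sum_(i' : Mi) (\sum_(j' : Mi) p i j i' j' * (j == j')%:R) * (i == i')%:R);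
    last by under eq_bigr do rewrite sum_delta; rewrite sum_delta.
  apply: eq_bigr => i' _; rewrite big_distrl /=; apply: eq_bigr => j' _.
  by rewrite /hh /= big_split /= !prod_eq; ring.
transitivity (\sum_(i : Mi) \sum_(j : Mi) `|psi i| ^+ 2 * `|psi j| ^+ 2).
  by do 2! (apply: eq_bigr => ? _); rewrite /p !normCK; ring.
under eq_bigr do rewrite -big_distrr /=.
by rewrite -big_distrl /= hpsi mul1r.
Qed.

Definition u0 : U := [ffun s => Ordinal (h0 s)].

Lemma f_ge0 u : 0 <= f u.
Proof. by rewrite /f exprn_ge0. Qed.

Lemma Q0 : Q pred0 = f u0.
Proof.
rewrite /Q (big_pred1 u0) // => u /=.
apply/forallP/eqP => [H|-> s]; last by rewrite ffunE.
by apply/ffunP => s; apply/val_inj; rewrite ffunE /=; apply/eqP; apply: H.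
Qed.

Lemma f0 : f u0 = 1.
Proof.
rewrite -Q0 Q_W big_pred0_eq mul1r -WT -(W_C predT).
by apply: W_ext.
Qed.

Lemma QT : \sum_(u : U) f u = \prod_(s : 'I_n) (d s)%:R.
Proof.
have : Q predT = \prod_(s : 'I_n) (d s)%:R by rewrite Q_W WT mulr1.
rewrite /Q => <-; apply: eq_bigl => u; apply/esym/forallP => s //.
Qed.

Lemma Q1_ge s : 1 <= Q (pred1 s).
Proof.
rewrite /Q (bigD1 u0) /=; last by apply/forallP => t; rewrite ffunE orbT.
by rewrite f0 lerDl sumr_ge0 // => u _; apply: f_ge0.
Qed.

Lemma Qco s : (d s)%:R ^+ 2 * Q (predC (pred1 s)) =
  (\prod_(t : 'I_n) (d t)%:R) * Q (pred1 s).
Proof.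
rewrite !Q_W W_C big_pred1_eq [X in _ = X * _](bigD1 s) //=; ring.
Qed.

Definition z (u : U) : nat := (\sum_(s : 'I_n) ((u s : nat) == 0%N))%N.

Lemma sumQco : \sum_(s : 'I_n) Q (predC (pred1 s)) = \sum_(u : U) (z u)%:R * f u.
Proof.
transitivity (\sum_(s : 'I_n) \sum_(u : U) (((u s : nat) == 0%N)%:R * f u)).
  apply: eq_bigr => s _; rewrite /Q big_mkcond; apply: eq_bigr => u _.
  have -> : [forall t, predC (pred1 s) t || ((u t : nat) == 0%N)] = ((u s : nat) == 0%N).
    apply/forallP/idP => [/(_ s)|H t]; first by rewrite /= eqxx.
    by rewrite /=; case: eqP => [->|].
  by case: eqP; rewrite ?mul1r ?mul0r.
rewrite exchange_big; apply: eq_bigr => u _.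
by rewrite -big_distrl /= /z natr_sum.
Qed.

Lemma z_u0 : z u0 = n.
Proof.
rewrite /z (eq_bigr (fun _ => 1%N)) ?sum1_card ?card_ord // => s _.
by rewrite ffunE.
Qed.

Lemma z_le (u : U) (s : 'I_n) : (u s : nat) != 0%N -> (z u <= n.-1)%N.
Proof.
move=> hs.
have H : (z u + 1 <= n)%N.
  have -> : 1%N = (\sum_(t : 'I_n) (t == s))%N.
    by rewrite (bigD1 s) //= eqxx big1 // => t /negbTE ->.
  rewrite /z -big_split /=.
  apply: (@leq_trans (\sum_(t : 'I_n) 1)%N); last by rewrite sum1_card card_ord.
  apply: leq_sum => t _; case: (eqVneq t s) => [->|ne]; first by rewrite (negbTE hs).
  by rewrite addn0; case: (_ == _).
by move: H; lia.
Qed.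

Lemma coef_le (hn : (0 < n)%N) (u : U) :
  [forall s, (u s : nat) != 0%N]%:R * (n.-1)%:R - (u == u0)%:R
    <= (n.-1)%:R - (z u)%:R :> C.
Proof.
have [/forallP H|H] := boolP [forall s, (u s : nat) != 0%N].
  have -> : z u = 0%N.
    by rewrite /z big1 // => s _; rewrite (negbTE (H s)).
  have -> : (u == u0) = false.
    apply/negbTE/eqP => e; have := H (Ordinal hn); rewrite e ffunE //.
  by rewrite mul1r subr0.
rewrite mul0r sub0r.
have [->|ne] := eqVneq u u0.
  rewrite z_u0 -(prednK hn) /= -addn1 natrD; set m := n.-1.
  rewrite le_eqVlt; apply/orP; left; apply/eqP; rewrite -[m.+1]addn1 natrD; ring.
rewrite oppr0 subr_ge0 ler_nat.
have [/existsP [s hs]|/existsPn h] := boolP [exists s, (u s : nat) != 0%N].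
  exact: z_le hs.
exfalso; move/eqP: ne; apply; apply/ffunP => s; apply/val_inj; rewrite ffunE /=.
by apply/eqP; have := h s; rewrite negbK.
Qed.

Lemma main_ineq (hn : (2 <= n)%N) :
  corr_norm2 w rho <=
    ((\prod_(s : 'I_n) (d s)%:R) * ((n - 1)%:R - \sum_(s : 'I_n) ((d s)%:R ^+ 2)^-1) + 1)
      / (n - 1)%:R.
Proof.
set D := \prod_(s : 'I_n) (d s)%:R.
have hn0 : (0 < n)%N by apply: leq_trans hn.
have hn1 : 0 < (n - 1)%:R :> C by rewrite ltr0n subn_gt0.
have e1 : (n - 1)%N = n.-1 by rewrite subn1.
rewrite ler_pdivlMr //.
have A : corr_norm2 w rho * (n - 1)%:R - 1 <=
         \sum_(u : U) ((n - 1)%:R - (z u)%:R) * f u.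
  apply: (@le_trans _ _ (\sum_(u : U) ([forall s, (u s : nat) != 0%N]%:R * (n.-1)%:R
                                 - (u == u0)%:R) * f u)).
    under eq_bigr do rewrite mulrBl; rewrite sumrB.
    rewrite e1; apply: lerB.
      rewrite /corr_norm2 big_mkcond big_distrl /=; rewrite le_eqVlt; apply/orP; left; apply/eqP/eq_bigr => u _.
      by case: ifP; rewrite ?mul1r ?mul0r //; rewrite mulrC.
    under eq_bigr do rewrite mulrC eq_sym.
    by rewrite sum_delta f0.
  apply: ler_sum => u _; apply: ler_wpM2r; first exact: f_ge0.
  by rewrite e1; apply: coef_le.
have B : \sum_(u : U) ((n - 1)%:R - (z u)%:R) * f u =
         (n - 1)%:R * D - \sum_(s : 'I_n) Q (predC (pred1 s)).
  under eq_bigr do rewrite mulrBl; rewrite sumrB -big_distrr /= QT sumQco //.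
have Cc : \sum_(s : 'I_n) D * ((d s)%:R ^+ 2)^-1 <= \sum_(s : 'I_n) Q (predC (pred1 s)).
  apply: ler_sum => s _.
  have ds : (d s)%:R ^+ 2 != 0 :> C by rewrite expf_neq0 // pnatr_eq0 -lt0n hd.
  rewrite -[Q (predC _)](mulKf ds) Qco -subr_ge0.
  have -> : ((d s)%:R ^+ 2)^-1 * (D * Q (pred1 s)) - D * ((d s)%:R ^+ 2)^-1 =
            D * ((d s)%:R ^+ 2)^-1 * (Q (pred1 s) - 1) by ring.
  apply: mulr_ge0; last by rewrite subr_ge0 Q1_ge.
  apply: mulr_ge0; first by apply: prodr_ge0 => t _; apply: ler0n.
  by rewrite invr_ge0 exprn_ge0 // ler0n.
rewrite B in A.
rewrite -lerBlDr; apply: (le_trans A).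
rewrite mulrBr mulr_sumr mulrC lerD2l lerN2 //.
Qed.
End Main.

Theorem lemma3 (C : numClosedFieldType) (n : nat) (d : 'I_n -> nat)
  (w : 'I_n -> C) (rho : multi_index n d -> multi_index n d -> C) :
  (2 <= n)%N ->
  (forall s, 2 <= d s)%N ->
  (forall s, (d s).-primitive_root (w s)) ->
  pure_state rho ->
  corr_norm2 w rho <=
    ((\prod_(s : 'I_n) (d s)%:R) * ((n - 1)%:R - \sum_(s : 'I_n) ((d s)%:R ^+ 2)^-1) + 1)
      / (n - 1)%:R.
Proof.
move=> hn hd hw [psi [hpsi hrho]].
apply: (main_ineq (psi := psi)) => //.
by move=> s; apply: leq_trans (hd s).
Qed.
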